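(* Let $t:\Sigma^*\to\Omega^*$ be a partial function with suffix-closed domain. If $X\subseteq\mathrm{dom}(t)$ contains a linear fooling set for $t$, then the $\overleftarrow{t}$-growth of $X$ is exponential.
   Context: The suffix expansion $\overleftarrow{t}$ maps $a_1\cdots a_n\in\mathrm{dom}(t)$ to the sequence $(t(a_1\cdots a_n),t(a_2\cdots a_n),\dots,t(a_n))$. The $\overleftarrow{t}$-growth of $X$ is $n\mapsto|\overleftarrow{t}(X\cap\Sigma^{\le n})|$; exponential means $\ge c^n$ for some $c>1$ and infinitely many $n$. A linear fooling scheme for $t$ is $(u_2,v_2,u,v,Z)$ with $u_2,v_2,u,v\in\Sigma^*$, $Z\subseteq\Sigma^*$, $u_2$ a suffix of $u$, $v_2$ a suffix of $v$, $|u_2|=|v_2|$, $\{u_2,v_2\}\{u,v\}^*Z\subseteq\mathrm{dom}(t)$, and for every $n\in\mathbb N$ there is $z_n\in Z$ with $|z_n|\in O(n)$ and $t(u_2wz_n)\neq t(v_2wz_n)$ for all $w\in\{u,v\}^{\le n}$. The set $\{u_2,v_2\}\{u,v\}^*Z$ is a linear fooling set for $t$; $X$ contains one if some linear fooling set is a subset of $X$. *)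

(* Defs.v *)
From mathcomp Require Import all_boot.
From Stdlib Require Import Reals ClassicalEpsilon.

Set Implicit Arguments.
Unset Strict Implicit.
Unset Printing Implicit Defensive.

Section Defs.
Variables (Sigma Omega : finType).

Definition ptrans := seq Sigma -> option (seq Omega).

Definition in_dom (t : ptrans) (w : seq Sigma) : Prop := t w <> None.

Definition suffix_closed_dom (t : ptrans) : Prop :=
  forall u v : seq Sigma, in_dom t (u ++ v) -> in_dom t v.

Definition is_suffix (x y : seq Sigma) : Prop := exists p, y = p ++ x.

Definition suffixes (w : seq Sigma) : seq (seq Sigma) :=
  [seq drop i w | i <- iota 0 (size w)].

Definition suffix_expansion (t : ptrans) (w : seq Sigma) : seq (option (seq Omega)) :=
  [seq t s | s <- suffixes w].

Definition words_upto (n : nat) : seq (seq Sigma) :=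
  flatten [seq [seq val w | w <- enum [set: k.-tuple Sigma]] | k <- iota 0 n.+1].

Definition decP (P : Prop) : bool :=
  if excluded_middle_informative P then true else false.

Definition growth (t : ptrans) (X : seq Sigma -> Prop) (n : nat) : nat :=
  size (undup [seq suffix_expansion t w | w <- words_upto n & decP (X w)]).

Definition exponential (f : nat -> nat) : Prop :=
  exists c : R, (1 < c)%R /\ forall N : nat, exists n : nat, (N <= n)%N /\ (c ^ n <= INR (f n))%R.

Definition in_star2 (u v : seq Sigma) (w : seq Sigma) : Prop :=
  exists bs : seq bool, w = flatten [seq if b then u else v | b <- bs].

Definition in_star2_le (u v : seq Sigma) (n : nat) (w : seq Sigma) : Prop :=
  exists bs : seq bool, (size bs <= n)%N /\ w = flatten [seq if b then u else v | b <- bs].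

Definition fooling_set (u2 v2 u v : seq Sigma) (Z : seq Sigma -> Prop) (x : seq Sigma) : Prop :=
  exists a w z, (a = u2 \/ a = v2) /\ in_star2 u v w /\ Z z /\ x = a ++ w ++ z.

Definition linear_fooling_scheme (t : ptrans) (u2 v2 u v : seq Sigma)
    (Z : seq Sigma -> Prop) : Prop :=
  [/\ is_suffix u2 u, is_suffix v2 v, size u2 = size v2,
      (forall x, fooling_set u2 v2 u v Z x -> in_dom t x) &
      exists (zs : nat -> seq Sigma) (C : nat),
        forall n : nat,
          [/\ Z (zs n), (size (zs n) <= C * n.+1)%N &
              forall w, in_star2_le u v n w ->
                t (u2 ++ w ++ zs n) <> t (v2 ++ w ++ zs n)]].

Definition contains_linear_fooling_set (t : ptrans) (X : seq Sigma -> Prop) : Prop :=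
  exists u2 v2 u v Z, linear_fooling_scheme t u2 v2 u v Z /\
    (forall x, fooling_set u2 v2 u v Z x -> X x).

End Defs.

(* Main.v *)
Require Import Defs.
From mathcomp Require Import all_boot.
From Stdlib Require Import Reals.
From mathcomp Require Import zify.
From Stdlib Require Import Lra Lia ClassicalEpsilon.

Section Aux.
Variables (Sigma Omega : finType) (t : ptrans Sigma Omega).

Definition FF (u v : seq Sigma) (bs : seq bool) : seq Sigma :=
  flatten [seq if b then u else v | b <- bs].

Definition PP (x x' : seq Sigma) :=
  forall i, (i < size x)%N -> t (drop i x) = t (drop i x').

Lemma se_eq x x' : suffix_expansion t x = suffix_expansion t x' ->
  size x = size x' /\ PP x x'.
Proof.
move=> E.
have Hs: size x = size x'.
  by move: (congr1 size E); rewrite /suffix_expansion /suffixes !size_map !size_iota.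
split=> // i Hi.
move: (congr1 (fun s => nth None s i) E).
rewrite /suffix_expansion /suffixes.
have Hi' : (i < size x')%N by rewrite -Hs.
rewrite (nth_map [::]); last by rewrite size_map size_iota.
rewrite (nth_map 0); last by rewrite size_iota.
rewrite (nth_map [::]); last by rewrite size_map size_iota.
rewrite (nth_map 0); last by rewrite size_iota.
by rewrite !nth_iota.
Qed.

Lemma suff_eq a a' y y' : size (a ++ y) = size (a' ++ y') -> size y = size y' ->
  PP (a ++ y) (a' ++ y') -> t y = t y'.
Proof.
move=> Hs Hy HP.
case: (posnP (size y)) => Hy0.
  move/size0nil: (Hy0) => ->.
  by move: Hy0; rewrite Hy => /size0nil ->.
have Ha : size a = size a' by move: Hs; rewrite !size_cat Hy; lia.
have := HP (size a).
rewrite drop_size_cat // Ha drop_size_cat //; apply.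
rewrite size_cat; lia.
Qed.

Lemma size_FF u v bs : (size (FF u v bs) <= size bs * maxn (size u) (size v))%N.
Proof.
elim: bs => [|b bs IH] //=.
rewrite /FF /= size_cat -/(FF u v bs) mulSn.
apply: leq_add => //; case: b; [exact: leq_maxl | exact: leq_maxr].
Qed.

Lemma in_words (x : seq Sigma) m : (size x <= m)%N -> x \in words_upto Sigma m.
Proof.
move=> Hx; apply/flattenP.
exists [seq val w | w <- enum [set: (size x).-tuple Sigma]].
  apply/mapP; exists (size x) => //; rewrite mem_iota /=; lia.
by apply/mapP; exists (in_tuple x) => //; rewrite mem_enum in_setT.
Qed.

Lemma growth_ge (X : seq Sigma -> Prop) (f : seq bool -> seq Sigma) n m :
  (forall bs, size bs = n -> X (f bs) /\ (size (f bs) <= m)%N) ->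
  (forall bs bs', size bs = n -> size bs' = n ->
     suffix_expansion t (f bs) = suffix_expansion t (f bs') -> bs = bs') ->
  (expn 2 n <= growth t X m)%N.
Proof.
move=> H1 H2.
rewrite /growth.
have := @uniq_leq_size _ [seq suffix_expansion t (f (val bs)) | bs <- enum {: n.-tuple bool}]
  (undup [seq suffix_expansion t w | w <- words_upto Sigma m & Defs.decP (X w)]).
rewrite size_map -cardE card_tuple card_bool; apply.
- rewrite map_inj_in_uniq ?enum_uniq // => bs bs' _ _ E.
  by apply: val_inj; apply: H2 E; rewrite size_tuple.
- move=> y /mapP [bs _ ->]; rewrite mem_undup; apply/mapP; exists (f bs) => //.
  rewrite mem_filter; case: (H1 bs (size_tuple bs)) => HX Hs; apply/andP; split.
    by rewrite /Defs.decP; case: excluded_middle_informative.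
  exact: in_words.
Qed.

Section Key.
Variables (u2 v2 u v z : seq Sigma) (n : nat).
Hypothesis hu : is_suffix u2 u.
Hypothesis hv : is_suffix v2 v.
Hypothesis hsz : size u2 = size v2.
Hypothesis fool : forall w, in_star2_le u v n w -> t (u2 ++ w ++ z) <> t (v2 ++ w ++ z).

Lemma key bs : forall bs' s, size bs = size bs' -> (size bs + size s <= n)%N ->
  size (u2 ++ FF u v bs ++ FF u v s ++ z) = size (u2 ++ FF u v bs' ++ FF u v s ++ z) ->
  PP (u2 ++ FF u v bs ++ FF u v s ++ z) (u2 ++ FF u v bs' ++ FF u v s ++ z) -> bs = bs'.
Proof.
elim/last_ind: bs => [|bs b IH] bs' s.
  by case: bs'.
case/lastP: bs' => [|bs' b']; first by rewrite size_rcons.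
rewrite !size_rcons => -[Hsz] Hn.
have E : forall c cs, FF u v (rcons cs c) ++ FF u v s ++ z = FF u v cs ++ FF u v (c :: s) ++ z.
  by move=> c cs; rewrite /FF map_rcons flatten_rcons /= -!catA.
rewrite !E.
have hs : in_star2_le u v n (FF u v s).
  by exists s; split => //; lia.
case: (eqVneq b b') => [<-|Hb] Hs HP.
  by congr rcons; apply: IH Hs HP => //=; lia.
exfalso; apply: (fool (FF u v s) hs).
case: hu => p hp; case: hv => q hq.
move: Hs HP; case: b b' Hb => [] [] // _.
- have -> : u2 ++ FF u v bs ++ FF u v (true :: s) ++ z = (u2 ++ FF u v bs ++ p) ++ (u2 ++ FF u v s ++ z)
    by rewrite /FF /= hp -!catA.
  have -> : u2 ++ FF u v bs' ++ FF u v (false :: s) ++ z = (u2 ++ FF u v bs' ++ q) ++ (v2 ++ FF u v s ++ z)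
    by rewrite /FF /= hq -!catA.
  move=> Hs HP; apply: (suff_eq _ _ _ _ Hs) HP.
  by rewrite !size_cat hsz.
- have -> : u2 ++ FF u v bs ++ FF u v (false :: s) ++ z = (u2 ++ FF u v bs ++ q) ++ (v2 ++ FF u v s ++ z)
    by rewrite /FF /= hq -!catA.
  have -> : u2 ++ FF u v bs' ++ FF u v (true :: s) ++ z = (u2 ++ FF u v bs' ++ p) ++ (u2 ++ FF u v s ++ z)
    by rewrite /FF /= hp -!catA.
  move=> Hs HP; symmetry; apply: (suff_eq _ _ _ _ Hs) HP.
  by rewrite !size_cat hsz.
Qed.
End Key.
End Aux.
Arguments FF {Sigma}.
Arguments PP {Sigma Omega}.

Lemma INR_expn2 m : INR (expn 2 m) = (2 ^ m)%R.
Proof.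
elim: m => [|m IH]; first by rewrite expn0 /=.
by rewrite expnS mult_INR IH /=.
Qed.

Theorem proposition5 (Sigma Omega : finType) (t : ptrans Sigma Omega)
    (X : seq Sigma -> Prop) :
  suffix_closed_dom t ->
  (forall w, X w -> in_dom t w) ->
  contains_linear_fooling_set t X ->
  exponential (growth t X).
Proof.
move=> _ _ [u2 [v2 [u [v [Z [[hu hv hsz hdom [zs [C hz]]] hX]]]]]].
pose M := maxn (size u) (size v).
pose A := (size u2 + C)%N.
pose B := (M + C + 1)%N.
pose K := (A + B)%N.
pose L n := (A + B * n)%N.
have hg : forall n, (expn 2 n <= growth t X (L n))%N.
  move=> n; case: (hz n) => hZ hzs hfool.
  apply: (@growth_ge _ _ t X (fun bs => u2 ++ FF u v bs ++ zs n) n (L n)).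
  - move=> bs Hbs; split.
      apply: hX; exists u2, (FF u v bs), (zs n); split; [by left | split; [by exists bs | by split]].
    have := size_FF _ u v bs; rewrite !size_cat Hbs -/M => h1.
    rewrite /L /A /B; nia.
  - move=> bs bs' Hb Hb' /se_eq [Hs HP].
    apply: (@key _ _ t u2 v2 u v (zs n) n hu hv hsz hfool bs bs' [::]) => //=.
    by rewrite Hb Hb'.
    by rewrite Hb addn0.
have Kpos : (0 < K)%N by rewrite /K /B; lia.
pose c := Rpower 2 (/ INR K).
have INRK : INR K <> 0%R by apply: not_0_INR; lia.
have cK : (c ^ K = 2)%R.
  rewrite /c -Rpower_pow; last by rewrite /Rpower; apply: exp_pos.
  rewrite Rpower_mult Rinv_l //; apply: Rpower_1; lra.
have c1 : (1 < c)%R.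
  rewrite /c -(Rpower_O 2); last lra.
  apply: Rpower_lt; first lra.
  apply: Rinv_0_lt_compat; apply: lt_0_INR; lia.
exists c; split => // N.
exists (L N.+1); split; first by rewrite /L /B; nia.
apply: Rle_trans (Rle_pow c (L N.+1) (K * N.+1)%coq_nat _ _) _.
- lra.
- rewrite /L /K; nia.
rewrite pow_mult cK -INR_expn2; apply: le_INR; apply/leP; exact: hg.
Qed.
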